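(* Let $G$ be an $(n,n,p_s,p_d)$-two-island network with groups $V_1,V_2$, and let the dual opinions evolve according to the dynamics in the context with common bias $b>0$, common resilience $\phi\in(0,1)$, and the symmetric initial condition $x_i(0)=x_0\in(\tfrac12,1)$, $y_i(0)=y_0\in[\tfrac12,x_0]$ for $i\in V_1$, $x_j(0)=1-x_0$, $y_j(0)=1-y_0$ for $j\in V_2$. Let $i\in V_1$. If there exists $k_x$ such that $x_i(t)$ is monotonic for all $t>k_x$, then there exists $k>k_x$ such that $y_i(t)$ is monotonic for all $t>k$, and both $x_i(t)$ and $y_i(t)$ converge as $t\to\infty$.
   Context: Let $n\ge 1$ and $p_s,p_d\in(0,1)$ with $p_s>p_d$ and $np_s,np_d$ positive integers. An $(n,n,p_s,p_d)$-two-island network is an undirected graph (no self-loops) with vertex set $V=V_1\cup V_2$, $V_1\cap V_2=\emptyset$, $|V_1|=|V_2|=n$, such that each node of $V_1$ has exactly $np_s$ neighbours in $V_1$ and $np_d$ neighbours in $V_2$, and each node of $V_2$ has exactly $np_s$ neighbours in $V_2$ and $np_d$ neighbours in $V_1$. Let $w_{ij}\in\{0,1\}$ be the adjacency matrix, $N_i$ the set of neighbours of $i$, and $d_i=\sum_{j\in N_i}w_{ij}$. Dual opinions dynamics: each $i\in V$ has $x_i(t),y_i(t)\in[0,1]$, $t=0,1,2,\dots$, updated by $$x_i(t+1)=\frac{x_i(t)^{b}s_i(t)}{x_i(t)^{b}s_i(t)+(1-x_i(t))^{b}(d_i-s_i(t))},\qquad y_i(t+1)=\phi\, x_i(t+1)+(1-\phi)\hat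 y_{i,avg}(t),$$ with $s_i(t)=\sum_{j\in N_i}w_{ij}y_j(t)$ and $\hat y_{i,avg}(t)=\sum_{j\in N_i}\frac{w_{ij}}{d_i}y_j(t)$. *)

(* Defs.v *)
From HB Require Import structures.
From mathcomp Require Import all_boot all_order all_algebra.
From mathcomp Require Import all_classical all_reals all_analysis.
Set Implicit Arguments. Unset Strict Implicit. Unset Printing Implicit Defensive.
Import Order.TTheory GRing.Theory Num.Theory.
Local Open Scope ring_scope.

(* Undirected simple graph on a finite vertex type T: symmetric irreflexive
   relation e (w_ij = 1 iff e i j). Neighbour set N_i, degree d_i = |N_i|. *)
Definition simple_graph (T : finType) (e : rel T) : Prop :=
  (forall i j, e i j = e j i) /\ (forall i, ~~ e i i).

Definition nbrs (T : finType) (e : rel T) (i : T) : {set T} := [set j | e i j].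

Definition deg (T : finType) (e : rel T) (i : T) : nat := #|nbrs e i|.

Definition two_island (R : realType) (T : finType) (e : rel T) (V1 V2 : {set T})
  (n : nat) (ps pd : R) : Prop :=
  simple_graph e /\ (1 <= n)%N /\
  0 < pd /\ pd < ps /\ ps < 1 /\
  [disjoint V1 & V2] /\ V1 :|: V2 = [set: T] /\
  #|V1| = n /\ #|V2| = n /\
  exists ks kd : nat, (0 < ks)%N /\ (0 < kd)%N /\
    n%:R * ps = ks%:R /\ n%:R * pd = kd%:R /\
    (forall i, i \in V1 ->
       #|[set j in V1 | e i j]| = ks /\ #|[set j in V2 | e i j]| = kd) /\
    (forall i, i \in V2 ->
       #|[set j in V2 | e i j]| = ks /\ #|[set j in V1 | e i j]| = kd).

Definition s_sum (R : realType) (T : finType) (e : rel T) (y : T -> R) (i : T) : R :=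
  \sum_(j in nbrs e i) y j.

Definition dual_dynamics (R : realType) (T : finType) (e : rel T) (b phi : R)
  (x y : nat -> T -> R) : Prop :=
  forall (t : nat) (i : T),
    let s := s_sum e (y t) i in
    let d := (deg e i)%:R in
    x t.+1 i = (x t i `^ b) * s /
               ((x t i `^ b) * s + ((1 - x t i) `^ b) * (d - s)) /\
    y t.+1 i = phi * x t.+1 i + (1 - phi) * (s / d).

Definition monotone_after (R : realType) (u : nat -> R) (k : nat) : Prop :=
  (forall t, (k < t)%N -> u t <= u t.+1) \/
  (forall t, (k < t)%N -> u t.+1 <= u t).

(* Main.v *)
Require Import Defs.
From HB Require Import structures.
From mathcomp Require Import all_boot all_order all_algebra.
From mathcomp Require Import all_classical all_reals all_analysis.
From mathcomp Require Import zify ring lra.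
Import Order.TTheory GRing.Theory Num.Theory.
Import numFieldNormedType.Exports.
Local Open Scope ring_scope.
Lemma mono_up (R : realType) (X Y : nat -> R) (a phi : R) kx :
  0 <= a -> 0 <= phi ->
  (forall t, Y t.+2 - Y t.+1 = phi * (X t.+2 - X t.+1) + a * (Y t.+1 - Y t)) ->
  (forall t, (kx < t)%N -> X t <= X t.+1) ->
  exists k, (kx < k)%N /\ monotone_after Y k.
Proof.
move=> ha hphi hrec hX.
case: (pselect (exists t0, (kx < t0)%N /\ Y t0 <= Y t0.+1)) => [[t0 [ht0 hY]]|hn].
  exists t0; split => //; left.
  have key : forall m, Y (t0 + m)%N <= Y (t0 + m).+1.
    elim=> [|m IH]; first by rewrite addn0.
    rewrite addnS.
    have h1 := hrec (t0 + m)%N.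
    have h2 : X (t0 + m).+1 <= X (t0 + m).+2 by apply: hX; lia.
    have h3 : 0 <= phi * (X (t0 + m).+2 - X (t0 + m).+1) by apply: mulr_ge0; lra.
    have h4 : 0 <= a * (Y (t0 + m).+1 - Y (t0 + m)) by apply: mulr_ge0; lra.
    lra.
  move=> t ht; have -> : t = (t0 + (t - t0))%N by lia.
  exact: key.
exists kx.+1; split => //; right => t ht.
have : ~ (Y t <= Y t.+1) by move=> h; apply: hn; exists t; split => //; lia.
move/negP; rewrite -ltNge; exact: ltW.
Qed.

Lemma mono_any (R : realType) (X Y : nat -> R) (a phi : R) kx :
  0 <= a -> 0 <= phi ->
  (forall t, Y t.+2 - Y t.+1 = phi * (X t.+2 - X t.+1) + a * (Y t.+1 - Y t)) ->
  monotone_after X kx ->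
  exists k, (kx < k)%N /\ monotone_after Y k.
Proof.
move=> ha hphi hrec [hX|hX]; first exact: (@mono_up R X Y a phi kx ha hphi hrec hX).
have [k [hk hm]] := @mono_up R (fun t => - X t) (fun t => - Y t) a phi kx ha hphi
  (fun t => ltac:(have := hrec t; lra)) (fun t ht => ltac:(have := hX t ht; lra)).
exists k; split => //; case: hm => hm; [right|left] => t ht; have := hm t ht; lra.
Qed.
Lemma sum_split (R: realType) (T: finType) (e: rel T) (V1 V2 : {set T}) (f : T -> R) c1 c2 j :
 [disjoint V1 & V2] -> V1 :|: V2 = [set: T] -> (forall j', j' \in V1 -> f j' = c1) ->
 (forall j', j' \in V2 -> f j' = c2) ->
 \sum_(j' in nbrs e j) f j' = c1 * #|[set j' in V1 | e j j']|%:R + c2 * #|[set j' in V2 | e j j']|%:R.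
Proof.
move=> hd hU h1 h2.
have hV2 : forall j', (j' \in V2) = (j' \notin V1).
  move=> j'; case h: (j' \in V1); first by rewrite (disjointFr hd h).
  have : j' \in V1 :|: V2 by rewrite hU inE.
  by rewrite inE h.
rewrite (bigID (fun j' => j' \in V1)) /= !mulr_natr.
congr (_ + _); rewrite -sumr_const; apply: eq_big => j'.
- by rewrite !inE andbC.
- by move=> /andP[_ h]; apply: h1.
- by rewrite !inE hV2 andbC.
- by move=> /andP[_ h]; apply: h2; rewrite hV2.
Qed.

Lemma step_alg (R : realType) (X Y ks kd b phi : R) :
  0 < X < 1 -> 0 <= Y <= 1 -> 0 < ks -> 0 < kd -> 0 < phi < 1 ->
  let S := Y*ks + (1-Y)*kd in let d := ks+kd in
  let A := X `^ b * S in let B := (1-X) `^ b * (d-S) in let X' := A/(A+B) in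
  let S2 := (1-Y)*ks + Y*kd in
  [/\ 0 < X' < 1, 0 <= phi*X' + (1-phi)*(S/d) <= 1,
   ((1-X) `^ b * S2)/((1-X) `^ b * S2 + (1-(1-X)) `^ b * (d - S2)) = 1 - X' &
   phi*(1 - X') + (1-phi)*(S2/d) = 1 - (phi*X' + (1-phi)*(S/d))].
Proof.
move=> /andP[hX0 hX1] /andP[hY0 hY1] hks hkd /andP[hp0 hp1] S d A B X' S2.
have hS : 0 < S by rewrite /S; nra.
have hdS : 0 < d - S by rewrite /d /S; nra.
have hA : 0 < A by apply: mulr_gt0 => //; apply: powR_gt0.
have hB : 0 < B by apply: mulr_gt0 => //; apply: powR_gt0; lra.
have hd : 0 < d by rewrite /d; lra.
have hX'0 : 0 < X' by apply: divr_gt0; lra.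
have hX'1 : X' < 1 by rewrite /X' ltr_pdivrMr; lra.
have hSd : 0 <= S / d <= 1.
  apply/andP; split; first by apply: divr_ge0; lra.
  by rewrite ler_pdivrMr //; lra.
split.
- by rewrite hX'0 hX'1.
- apply/andP; split; nra.
- have -> : 1 - (1 - X) = X by ring.
  have -> : S2 = d - S by rewrite /S2 /d /S; ring.
  have -> : d - (d - S) = S by ring.
  rewrite /X' -/B -/A.
  have hAB : A + B != 0 by apply/eqP; lra.
  have hBA : B + A != 0 by apply/eqP; lra.
  by field.
- have -> : S2 = d - S by rewrite /S2 /d /S; ring.
  have hd0 : d != 0 by apply/eqP; lra.
  by field.
Qed.
Local Open Scope classical_set_scope.
Local Open Scope ring_scope.
Lemma mono_cvg (R : realType) (u : nat -> R) k :
  monotone_after u k -> (forall t, 0 <= u t <= 1) -> exists l : R, u @ \oo --> l.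
Proof.
move=> hm hb.
have hc : cvgn (fun n => u (n + k.+1)%N).
  case: hm => hm.
    apply: nondecreasing_is_cvgn.
      apply/nondecreasing_seqP => m; rewrite addSn; apply: hm; lia.
    by exists 1 => _ [m _ <-]; case/andP: (hb (m + k.+1)%N).
  apply: nonincreasing_is_cvgn.
    apply/nonincreasing_seqP => m; rewrite addSn; apply: hm; lia.
  by exists 0 => _ [m _ <-]; case/andP: (hb (m + k.+1)%N).
case/cvg_ex: hc => /= l hl; exists l.
by rewrite -(cvg_shiftn k.+1).
Qed.
Theorem lemmaB4 (R : realType) (T : finType) (e : rel T) (V1 V2 : {set T})
  (n : nat) (ps pd b phi x0 y0 : R) (x y : nat -> T -> R) :
  two_island e V1 V2 n ps pd ->
  0 < b -> 0 < phi -> phi < 1 ->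
  1 / 2 < x0 -> x0 < 1 -> 1 / 2 <= y0 -> y0 <= x0 ->
  (forall i, i \in V1 -> x 0%N i = x0 /\ y 0%N i = y0) ->
  (forall j, j \in V2 -> x 0%N j = 1 - x0 /\ y 0%N j = 1 - y0) ->
  dual_dynamics e b phi x y ->
  forall (i : T), i \in V1 ->
  forall kx : nat, monotone_after (fun t => x t i) kx ->
  (exists k : nat, (kx < k)%N /\ monotone_after (fun t => y t i) k) /\
  (exists lx : R, (fun t => x t i) @ \oo --> lx) /\
  (exists ly : R, (fun t => y t i) @ \oo --> ly).
Proof.
move=> [_ [hn [hpd [hpdps [hps1 [hdis [hU [_ [_ hrest]]]]]]]]].
case: hrest => ks [kd [hks [hkd [hks' [hkd' [hV1 hV2]]]]]].
move=> hb hp0 hp1 hx0 hx1 hy0 hy1 hI1 hI2 hdyn i hi kx hmx.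
set X := fun t => x t i; set Y := fun t => y t i.
have hks0 : (0 : R) < ks%:R by rewrite ltr0n.
have hkd0 : (0 : R) < kd%:R by rewrite ltr0n.
have hkskd : (kd%:R : R) <= ks%:R.
  rewrite -hks' -hkd'; have : (0:R) <= n%:R by rewrite ler0n.
  move=> h; nra.
have hinV : forall j, (j \in V1) || (j \in V2).
  move=> j; have : j \in V1 :|: V2 by rewrite hU inE.
  by rewrite inE.
have hdeg : forall j, ((deg e j)%:R : R) = ks%:R + kd%:R.
  move=> j; rewrite /deg -sumr_const.
  rewrite (@sum_split R T e V1 V2 (fun _ => 1) 1 1 j hdis hU) // !mul1r.
  by case/orP: (hinV j) => hj; [case: (hV1 j hj) | case: (hV2 j hj)] => -> ->; rewrite // addrC.
pose Inv t := [/\ 0 < X t < 1, 0 <= Y t <= 1 &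
  forall j, (j \in V1 -> x t j = X t /\ y t j = Y t) /\
            (j \in V2 -> x t j = 1 - X t /\ y t j = 1 - Y t)].
have hS : forall t, Inv t -> forall j, j \in V1 ->
   s_sum e (y t) j = Y t * ks%:R + (1 - Y t) * kd%:R.
  move=> t [_ _ hs] j hj; rewrite /s_sum.
  rewrite (@sum_split R T e V1 V2 (y t) (Y t) (1 - Y t) j hdis hU).
  - by case: (hV1 j hj) => -> ->.
  - by move=> j' hj'; case: (hs j') => h _; case: (h hj').
  - by move=> j' hj'; case: (hs j') => _ h; case: (h hj').
have hS2 : forall t, Inv t -> forall j, j \in V2 ->
   s_sum e (y t) j = (1 - Y t) * ks%:R + Y t * kd%:R.
  move=> t [_ _ hs] j hj; rewrite /s_sum.
  rewrite (@sum_split R T e V1 V2 (y t) (Y t) (1 - Y t) j hdis hU).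
  - by case: (hV2 j hj) => -> ->; rewrite addrC.
  - by move=> j' hj'; case: (hs j') => h _; case: (h hj').
  - by move=> j' hj'; case: (hs j') => _ h; case: (h hj').
have hinv : forall t, Inv t.
  elim=> [|t IH].
    have [hxi hyi] := hI1 i hi.
    split.
    - rewrite /X hxi; apply/andP; split; lra.
    - rewrite /Y hyi; apply/andP; split; lra.
    - move=> j; rewrite /X /Y hxi hyi; split; [exact: hI1 | exact: hI2].
  have hIt := IH; case: IH => hXt hYt hs.
  have hp : 0 < phi < 1 by rewrite hp0 hp1.
  have [h1 h2 h3 h4] := @step_alg R _ _ _ _ b phi hXt hYt hks0 hkd0 hp.
  have hXi : X t.+1 = X t `^ b * (Y t * ks%:R + (1 - Y t) * kd%:R) /
        (X t `^ b * (Y t * ks%:R + (1 - Y t) * kd%:R) +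
         (1 - X t) `^ b * (ks%:R + kd%:R - (Y t * ks%:R + (1 - Y t) * kd%:R))).
    by rewrite /X; have [-> _] := hdyn t i; rewrite (hS t hIt i hi) hdeg.
  have hYi : Y t.+1 = phi * X t.+1 + (1 - phi) * ((Y t * ks%:R + (1 - Y t) * kd%:R) / (ks%:R + kd%:R)).
    by rewrite /Y; have [_ ->] := hdyn t i; rewrite (hS t hIt i hi) hdeg.
  split.
  - by rewrite hXi.
  - by rewrite hYi hXi.
  move=> j; split => hj.
    have [hxj hyj] := hdyn t j.
    case: (hs j) => h _; case: (h hj) => hx hy.
    split; [rewrite hxj | rewrite hyj hxj]; rewrite (hS t hIt j hj) hdeg ?hYi ?hXi hx //.
  have [hxj hyj] := hdyn t j.
  case: (hs j) => _ h; case: (h hj) => hx hy.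
  split; [rewrite hxj | rewrite hyj hxj]; rewrite (hS2 t hIt j hj) hdeg ?hYi ?hXi hx.
  - by rewrite h3.
  - by rewrite h3 h4.
have hYrec : forall t, Y t.+1 = phi * X t.+1 +
     (1 - phi) * ((Y t * ks%:R + (1 - Y t) * kd%:R) / (ks%:R + kd%:R)).
  by move=> t; rewrite /Y; have [_ ->] := hdyn t i; rewrite (hS t (hinv t) i hi) hdeg.
have hd0 : (ks%:R + kd%:R : R) != 0 by apply/eqP; lra.
split.
  apply: (@mono_any R X Y ((1 - phi) * (ks%:R - kd%:R) / (ks%:R + kd%:R)) phi kx).
  - apply: divr_ge0; last lra.
    apply: mulr_ge0; lra.
  - exact: ltW.
  - move=> t; rewrite (hYrec t.+1) (hYrec t); field; exact: hd0.
  - exact: hmx.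
split.
  apply: (@mono_cvg R X kx hmx) => t; case: (hinv t) => /andP[h1 h2] _ _.
  by apply/andP; split; lra.
have [k [_ hk]] : exists k, (kx < k)%N /\ monotone_after Y k.
  apply: (@mono_any R X Y ((1 - phi) * (ks%:R - kd%:R) / (ks%:R + kd%:R)) phi kx).
  - apply: divr_ge0; last lra.
    apply: mulr_ge0; lra.
  - exact: ltW.
  - move=> t; rewrite (hYrec t.+1) (hYrec t); field; exact: hd0.
  - exact: hmx.
apply: (@mono_cvg R Y k hk) => t; by case: (hinv t).
Qed.
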